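(* Let $\lambda$ be a nonzero real number. For every integer $n\ge 0$ and every $x$ in a neighborhood of $0$, $$\mathrm{bel}_{n,\lambda}(x)=\mathrm{Bel}_{n,\lambda}\!\left(\frac{x}{1+\lambda x}\right).$$
   Context: For nonzero $\lambda\in\mathbb{R}$, $e_{\lambda}(t)=(1+\lambda t)^{1/\lambda}$. The degenerate Bell polynomials $\mathrm{Bel}_{n,\lambda}(x)$ are defined by $e_{\lambda}\big(x(e^{t}-1)\big)=\sum_{n=0}^{\infty}\mathrm{Bel}_{n,\lambda}(x)\frac{t^{n}}{n!}$. The degenerate Bell polynomials of the second kind $\mathrm{bel}_{n,\lambda}(x)$ are defined by $e_{\lambda}(xe^{t})\cdot e_{\lambda}(x)^{-1}=\sum_{n=0}^{\infty}\mathrm{bel}_{n,\lambda}(x)\frac{t^{n}}{n!}$. *)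

(* Defs.v *)
From Stdlib Require Import Reals.
From Coquelicot Require Import Coquelicot.
Open Scope R_scope.

(* Degenerate exponential e_lambda(t) = (1 + lambda t)^(1/lambda)
   (real power; meaningful where 1 + lambda t > 0, which holds near the
   points where it is used below). *)
Definition e_lam (lam t : R) : R := Rpower (1 + lam * t) (1 / lam).

(* Degenerate Bell polynomials: n-th Taylor coefficient (times n!) of
   e_lambda(x (e^t - 1)) at t = 0, i.e. the n-th derivative in t at 0. *)
Definition Bel (n : nat) (lam x : R) : R :=
  Derive_n (fun t => e_lam lam (x * (exp t - 1))) n 0.

Definition bel (n : nat) (lam x : R) : R :=
  Derive_n (fun t => e_lam lam (x * exp t) * / e_lam lam x) n 0.

(* Main.v *)
Require Import Defs.
From Stdlib Require Import Reals Lra.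
From Coquelicot Require Import Coquelicot.
Open Scope R_scope.

Theorem theorem6 (lam : R) (hlam : lam <> 0) :
  exists eps : R, 0 < eps /\
    forall (n : nat) (x : R), Rabs x < eps ->
      bel n lam x = Bel n lam (x / (1 + lam * x)).
Proof.
  assert (Hl : 0 < Rabs lam) by (apply Rabs_pos_lt; auto).
  exists (/ (2 * Rabs lam)). split.
  { apply Rinv_0_lt_compat; lra. }
  intros n x Hx.
  assert (Hlx : Rabs (lam * x) < / 2).
  { rewrite Rabs_mult.
    apply Rmult_lt_compat_l with (r := Rabs lam) in Hx; auto.
    replace (Rabs lam * / (2 * Rabs lam)) with (/2) in Hx by (field; lra). lra. }
  assert (Hpos : 0 < 1 + lam * x) by (apply Rabs_def2 in Hlx; lra).
  unfold bel, Bel. apply Derive_n_ext_loc.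
  assert (Hln : 0 < ln 2).
  { rewrite <- ln_1. apply ln_increasing; lra. }
  exists (mkposreal _ Hln). intros t Ht.
  unfold ball in Ht; simpl in Ht; unfold AbsRing_ball, abs, minus, plus, opp in Ht; simpl in Ht.
  rewrite Ropp_0, Rplus_0_r in Ht.
  apply Rabs_def2 in Ht.
  assert (He : 0 < exp t < 2).
  { split. apply exp_pos. rewrite <- (exp_ln 2) by lra. apply exp_increasing; lra. }
  assert (Hxe : 0 < 1 + lam * (x * exp t)).
  { apply Rabs_def2 in Hlx.
    replace (lam * (x * exp t)) with ((lam * x) * exp t) by ring.
    destruct (Rle_dec 0 (lam * x)); nra. }
  assert (Hq : 0 < 1 + lam * (x / (1 + lam * x) * (exp t - 1))).
  { replace (1 + lam * (x / (1 + lam * x) * (exp t - 1)))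
      with ((1 + lam * (x * exp t)) / (1 + lam * x)) by (field; lra).
    apply Rdiv_lt_0_compat; auto. }
  unfold e_lam.
  replace (1 + lam * (x * exp t)) with ((1 + lam * x) * (1 + lam * (x / (1 + lam * x) * (exp t - 1))))
    by (field; lra).
  rewrite <- Rpower_mult_distr by auto.
  field. unfold Rpower. apply Rgt_not_eq, exp_pos.
Qed.
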